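(* Let $\mathfrak L_1,\dots,\mathfrak L_n,\mathfrak L$ be complete lattices and let $(\mathcal F_\alpha)_{\alpha\in\mathcal O}$ be a family with $\mathcal F_\alpha:\mathfrak L_1\times\dots\times\mathfrak L_n\to(\mathfrak L\to^+\mathfrak L)$ which is $\limsup$-pushable in all arguments (i.e. the family of maps $(\vec{\mathcal G},\mathcal X)\mapsto\mathcal F_\alpha(\vec{\mathcal G})(\mathcal X)$ is $\limsup$-pushable). Then for every $\beta\in\mathcal O$ the family $\mathcal H_\alpha:\mathfrak L_1\times\dots\times\mathfrak L_n\to\mathfrak L$, $\mathcal H_\alpha(\vec{\mathcal G})=\nu^\beta(\mathcal F_\alpha(\vec{\mathcal G}))$, is $\limsup$-pushable.
   Context: $\mathcal O$ is the set of ordinals $\le\top_{\mathsf{ord}}$ for a fixed ordinal $\top_{\mathsf{ord}}$ ($=\beth_\omega$); $\lambda$ ranges over nonzero limit ordinals in $\mathcal O$. For a complete lattice $\mathfrak L$ and $f:\mathcal O\to\mathfrak L$: $\liminf_{\alpha\to\lambda}f(\alpha)=\sup_{\alpha_0<\lambda}\inf_{\alpha_0\le\alpha<\lambda}f(\alpha)$, $\limsup_{\alpha\to\lambda}f(\alpha)=\inf_{\alpha_0<\lambda}\sup_{\alpha_0\le\alpha<\lambda}f(\alpha)$; on products of lattices these are taken componentwise. $\mathfrak L\to^+\mathfrak L$ is the set of monotone maps. For $f:\mathfrak L\to\mathfrak L$ and $g\in\mathfrak L$, transfinite iteration: $f^0(g)=g$, $f^{\alpha+1}(g)=f(f^\alpha(g))$,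 $f^\lambda(g)=\limsup_{\alpha\to\lambda}f^\alpha(g)$; $\nu^\alpha f:=f^\alpha(\top)$, $\mu^\alpha f:=f^\alpha(\bot)$. A family $(\mathcal F_\alpha)_{\alpha\in\mathcal O}$ of maps $\mathfrak K\to\mathfrak K'$ between complete lattices is $\limsup$-pushable if for every $\mathcal G:\mathcal O\to\mathfrak K$ and every nonzero limit $\lambda$: $\limsup_{\alpha\to\lambda}\mathcal F_\gamma(\mathcal G_\alpha)\sqsubseteq\mathcal F_\gamma(\limsup_{\alpha\to\lambda}\mathcal G_\alpha)$ for all $\gamma\in\mathcal O$, and $\limsup_{\alpha\to\lambda}\mathcal F_\alpha(\mathcal G_\alpha)\sqsubseteq\mathcal F_\lambda(\limsup_{\alpha\to\lambda}\mathcal G_\alpha)$. *)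

(* Defs.v *)
From Stdlib Require Import ClassicalEpsilon FunctionalExtensionality.
From mathcomp Require Import ssreflect ssrfun ssrbool eqtype ssrnat fintype.

Set Implicit Arguments.
Unset Strict Implicit.

Record clat := CLat {
  car :> Type;
  le : car -> car -> Prop;
  sup : (car -> Prop) -> car;
  le_refl : forall x, le x x;
  le_trans : forall x y z, le x y -> le y z -> le x z;
  le_antisym : forall x y, le x y -> le y x -> x = y;
  sup_ub : forall (S : car -> Prop) x, S x -> le x (sup S);
  sup_least : forall (S : car -> Prop) z, (forall x, S x -> le x z) -> le (sup S) z
}.
Arguments le : clear implicits.
Arguments sup : clear implicits.

Definition inf (L : clat) (S : L -> Prop) : L :=
  sup L (fun x => forall y, S y -> le L x y).
Arguments inf : clear implicits.
Definition top (L : clat) : L := sup L (fun _ => True).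
Definition bot (L : clat) : L := sup L (fun _ => False).

Section ProdLat.
Variables (n : nat) (Ls : 'I_n -> clat).
Definition prodn_le (x y : forall i, Ls i) := forall i, le (Ls i) (x i) (y i).
Definition prodn_sup (S : (forall i, Ls i) -> Prop) : forall i, Ls i :=
  fun i => sup (Ls i) (fun a => exists p, S p /\ a = p i).
Lemma prodn_le_refl x : prodn_le x x. Proof. by move=> i; apply: le_refl. Qed.
Lemma prodn_le_trans x y z : prodn_le x y -> prodn_le y z -> prodn_le x z.
Proof. by move=> h1 h2 i; apply: le_trans (h1 i) (h2 i). Qed.
Lemma prodn_le_antisym x y : prodn_le x y -> prodn_le y x -> x = y.
Proof.
move=> h1 h2; apply: functional_extensionality_dep => i.
exact: le_antisym (h1 i) (h2 i).
Qed.
Lemma prodn_sup_ub S x : S x -> prodn_le x (prodn_sup S).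
Proof. by move=> Sx i; apply: sup_ub; exists x. Qed.
Lemma prodn_sup_least S z : (forall x, S x -> prodn_le x z) -> prodn_le (prodn_sup S) z.
Proof. by move=> h i; apply: sup_least => a [p [Sp ->]]; apply: h. Qed.
Definition prodn_clat : clat :=
  CLat prodn_le_refl prodn_le_trans prodn_le_antisym prodn_sup_ub prodn_sup_least.
End ProdLat.

Section Prod2.
Variables (K L : clat).
Definition prod2_le (x y : K * L) := le K x.1 y.1 /\ le L x.2 y.2.
Definition prod2_sup (S : K * L -> Prop) : K * L :=
  (sup K (fun a => exists p, S p /\ a = p.1), sup L (fun a => exists p, S p /\ a = p.2)).
Lemma prod2_le_refl x : prod2_le x x. Proof. by split; apply: le_refl. Qed.
Lemma prod2_le_trans x y z : prod2_le x y -> prod2_le y z -> prod2_le x z.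
Proof. by move=> [a b] [c d]; split; [apply: le_trans a c | apply: le_trans b d]. Qed.
Lemma prod2_le_antisym x y : prod2_le x y -> prod2_le y x -> x = y.
Proof.
case: x => x1 x2; case: y => y1 y2 [/= a b] [/= c d].
by rewrite (le_antisym a c) (le_antisym b d).
Qed.
Lemma prod2_sup_ub S x : S x -> prod2_le x (prod2_sup S).
Proof. by move=> Sx; split; apply: sup_ub; exists x. Qed.
Lemma prod2_sup_least S z : (forall x, S x -> prod2_le x z) -> prod2_le (prod2_sup S) z.
Proof.
move=> h; split; apply: sup_least => a [p [Sp ->]]; by case: (h p Sp).
Qed.
Definition prod2_clat : clat :=
  CLat prod2_le_refl prod2_le_trans prod2_le_antisym prod2_sup_ub prod2_sup_least.
End Prod2.

Record monmap (L : clat) := MonMap {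
  mfun :> L -> L;
  mfun_mono : forall x y, le L x y -> le L (mfun x) (mfun y)
}.

Record ordinals := Ordinals {
  ord :> Type;
  olt : ord -> ord -> Prop;
  olt_wf : well_founded olt;
  olt_trans : forall a b c, olt a b -> olt b c -> olt a c;
  olt_total : forall a b, olt a b \/ a = b \/ olt b a;
  otop : ord;
  otop_max : forall a, a = otop \/ olt a otop
}.
Arguments olt : clear implicits.

Section OrdDefs.
Variable O : ordinals.
Definition ole (a b : O) := olt O a b \/ a = b.

Definition is_limit (l : O) :=
  (exists a, olt O a l) /\ (forall a, olt O a l -> exists c, olt O a c /\ olt O c l).

Definition is_pred (p a : O) :=
  olt O p a /\ ~ (exists c, olt O p c /\ olt O c a).

Definition limsup (L : clat) (f : O -> L) (l : O) : L :=
  inf L (fun y => exists a0, olt O a0 l /\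
     y = sup L (fun x => exists a, ole a0 a /\ olt O a l /\ x = f a)).

(* dependent version used inside the recursion *)
Definition limsup_dep (L : clat) (l : O) (f : forall a, olt O a l -> L) : L :=
  inf L (fun y => exists a0, olt O a0 l /\
     y = sup L (fun x => exists a (h : olt O a l), ole a0 a /\ x = f a h)).

(* Transfinite iteration f^a(g):
   f^0 g = g, f^(p+1) g = f (f^p g), f^l g = limsup_{a -> l} f^a g. *)
Definition iter_step (L : clat) (f : L -> L) (g : L)
    (a : O) (rec : forall c, olt O c a -> L) : L :=
  match excluded_middle_informative (exists p, is_pred p a) with
  | left H =>
      let p := proj1_sig (constructive_indefinite_description _ H) in
      let Hp := proj2_sig (constructive_indefinite_description _ H) in
      f (rec p (proj1 Hp))
  | right _ =>
      match excluded_middle_informative (exists c, olt O c a) with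
      | left _ => limsup_dep rec
      | right _ => g
      end
  end.

Definition titer (L : clat) (f : L -> L) (g : L) : O -> L :=
  Fix (@olt_wf O) (fun _ => car L) (iter_step f g).

Definition nu_iter (L : clat) (f : L -> L) (a : O) : L := titer f (top L) a.

Definition pushable (K K' : clat) (F : O -> K -> K') :=
  forall (G : O -> K) (l : O), is_limit l ->
    (forall c : O, le K' (limsup (fun a => F c (G a)) l) (F c (limsup G l))) /\
    le K' (limsup (fun a => F a (G a)) l) (F l (limsup G l)).
End OrdDefs.

(* Main.v *)
Require Import Defs.
From mathcomp Require Import ssreflect ssrfun ssrbool eqtype ssrnat fintype.
From Stdlib Require Import ClassicalEpsilon FunctionalExtensionality PropExtensionality Classical.
Local Notation le_trans := Defs.le_trans.
Local Notation le_refl := Defs.le_refl.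
Local Notation le_antisym := Defs.le_antisym.

Lemma inf_lb {L : clat} {S : L -> Prop} y : S y -> le L (inf L S) y.
Proof. move=> Sy; apply: sup_least => x hx; exact: hx. Qed.

Lemma inf_glb {L : clat} {S : L -> Prop} x : (forall y, S y -> le L x y) -> le L x (inf L S).
Proof. move=> h; exact: sup_ub. Qed.

Lemma top_max {L : clat} x : le L x (top L).
Proof. exact: sup_ub. Qed.

Lemma bot_min {L : clat} x : le L (bot L) x.
Proof. by apply: sup_least. Qed.

Lemma limsup_le_sup {O : ordinals} {L : clat} (f : O -> L) {l a0 : O} : olt O a0 l ->
  le L (limsup f l) (sup L (fun x => exists a, ole a0 a /\ olt O a l /\ x = f a)).
Proof. move=> h; apply: inf_lb; by exists a0. Qed.

Lemma limsup_mono {O : ordinals} {L : clat} (f g : O -> L) (l : O) :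
  (forall a, olt O a l -> le L (f a) (g a)) -> le L (limsup f l) (limsup g l).
Proof.
move=> h; apply: inf_glb => y [a0 [ha0 ->]].
apply: le_trans (limsup_le_sup f ha0) _.
apply: sup_least => x [a [h1 [h2 ->]]].
apply: le_trans (h a h2) _; apply: sup_ub; by exists a.
Qed.

Lemma titer_eq {O : ordinals} {L : clat} (f : L -> L) g (a : O) :
  titer f g a = @iter_step O L f g a (fun c _ => titer f g c).
Proof.
rewrite /titer Fix_eq //.
move=> x r1 r2 h.
have -> : r1 = r2 by apply: functional_extensionality_dep => y;
  apply: functional_extensionality_dep => p; apply: h.
by [].
Qed.

Lemma pred_uniq {O : ordinals} {p q a : O} : is_pred p a -> is_pred q a -> p = q.
Proof.
move=> [hp np] [hq nq]; case: (olt_total p q) => [h|[h|h]] //.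
- by case: np; exists q.
- by case: nq; exists p.
Qed.

Lemma titer_succ {O : ordinals} {L : clat} (f : L -> L) g {p a : O} :
  is_pred p a -> titer f g a = f (titer f g p).
Proof.
move=> hp; rewrite titer_eq /iter_step.
case: excluded_middle_informative => [H|H]; last by case: H; exists p.
case: (constructive_indefinite_description _ H) => q hq /=.
by rewrite (pred_uniq hq hp).
Qed.

Lemma titer_zero {O : ordinals} {L : clat} (f : L -> L) g {a : O} :
  ~ (exists c, olt O c a) -> titer f g a = g.
Proof.
move=> h; rewrite titer_eq /iter_step.
case: excluded_middle_informative => [H|_].
  by exfalso; case: H => p [hp _]; apply: h; exists p.
case: excluded_middle_informative => // H.
Qed.

Lemma titer_lim {O : ordinals} {L : clat} (f : L -> L) g {a : O} :
  ~ (exists p, is_pred p a) -> (exists c, olt O c a) -> titer f g a = limsup (titer f g) a.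
Proof.
move=> h1 h2; rewrite titer_eq /iter_step.
case: excluded_middle_informative => [//|_].
case: excluded_middle_informative => [_|//].
rewrite /limsup_dep /limsup /inf.
have E : forall a0,
  sup L (fun x => exists b (h : olt O b a), ole a0 b /\ x = titer f g b) =
  sup L (fun x => exists b, ole a0 b /\ olt O b a /\ x = titer f g b).
  move=> a0; apply: le_antisym; apply: sup_least.
  - move=> x [b [hb [h3 ->]]]; apply: sup_ub; by exists b.
  - move=> x [b [h3 [hb ->]]]; apply: sup_ub; by exists b, hb.
f_equal; apply: functional_extensionality => x; apply: propositional_extensionality.
split=> hx y hy; apply: hx; case: hy => [a0 [ha0 ->]]; exists a0; split => //;
  by rewrite E.
Qed.

Lemma nu_dec {O : ordinals} {L : clat} (f : monmap L) : forall a : O,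
  le L (f (nu_iter f a)) (nu_iter f a) /\
  (forall c, olt O c a -> le L (nu_iter f a) (nu_iter f c)).
Proof.
apply: (well_founded_ind (@olt_wf O)) => a IH.
rewrite /nu_iter in IH *.
case: (classic (exists p, is_pred p a)) => [[p hp]|np].
- rewrite (titer_succ _ _ hp).
  have [IH1 IH2] := IH p (proj1 hp).
  split; first by apply: mfun_mono.
  move=> c hc. apply: le_trans IH1 _.
  case: (olt_total c p) => [h|[->|h]]; [exact: IH2 | exact: le_refl | ].
  by case: (proj2 hp); exists c.
- case: (classic (exists c, olt O c a)) => [hc|hc].
  + rewrite (titer_lim _ _ np hc).
    have dec : forall c, olt O c a -> le L (limsup (titer f (top L)) a) (titer f (top L) c).
      move=> c hca; apply: le_trans (limsup_le_sup _ hca) _.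
      apply: sup_least => x [b [hb1 [hb2 ->]]].
      case: hb1 => [hcb|<-]; [exact: (proj2 (IH b hb2) c hcb) | exact: le_refl].
    split => //.
    apply: inf_glb => y [a0 [ha0 ->]].
    apply: le_trans (mfun_mono f (dec a0 ha0)) _.
    apply: le_trans (proj1 (IH a0 ha0)) _.
    apply: sup_ub; exists a0; split; [by right| split => //].
  + rewrite (titer_zero _ _ hc); split; first exact: top_max.
    move=> c hca; by case: hc; exists c.
Qed.

Lemma main_push {O : ordinals} {L : clat} (fa : O -> monmap L) (finf : monmap L) (l : O)
  (hyp : forall X : O -> L, le L (limsup (fun a => fa a (X a)) l) (finf (limsup X l))) :
  forall b : O, le L (limsup (fun a => nu_iter (fa a) b) l) (nu_iter finf b).
Proof.
apply: (well_founded_ind (@olt_wf O)) => b IH.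
case: (classic (exists p, is_pred p b)) => [[p hp]|np].
- have E : (fun a => nu_iter (fa a) b) = (fun a => fa a (nu_iter (fa a) p)).
    by apply: functional_extensionality => a; rewrite /nu_iter (titer_succ _ _ hp).
  rewrite E {2}/nu_iter (titer_succ _ _ hp).
  apply: le_trans (hyp (fun a => nu_iter (fa a) p)) _.
  apply: mfun_mono; exact: IH p (proj1 hp).
- case: (classic (exists c, olt O c b)) => [hc|hc].
  + have E : (fun a => nu_iter (fa a) b) = (fun a => limsup (nu_iter (fa a)) b).
      by apply: functional_extensionality => a; rewrite /nu_iter (titer_lim _ _ np hc).
    rewrite E {2}/nu_iter (titer_lim _ _ np hc).
    apply: inf_glb => y [g0 [hg0 ->]].
    apply: le_trans (limsup_mono (fun a => limsup (nu_iter (fa a)) b)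
                        (fun a => nu_iter (fa a) g0) l _) _.
      move=> a _; apply: le_trans (limsup_le_sup _ hg0) _.
      apply: sup_least => x [c [hc1 [hc2 ->]]].
      case: hc1 => [hgc|<-]; [exact: (proj2 (nu_dec (fa a) c) g0 hgc) | exact: le_refl].
    apply: le_trans (IH g0 hg0) _.
    apply: sup_ub; exists g0; split; [by right|split=>//].
  + rewrite {2}/nu_iter (titer_zero _ _ hc); exact: top_max.
Qed.

Lemma limsup_fst {O : ordinals} {K L : clat} (H : O -> prod2_clat K L) (l : O) :
  (limsup H l).1 = limsup (fun a => (H a).1) l.
Proof.
apply: le_antisym.
- apply: sup_least => x [p [hp ->]].
  apply: inf_glb => y [a0 [ha0 ->]].
  have [h1 _] := hp _ (ex_intro _ a0 (conj ha0 erefl)).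
  apply: le_trans h1 _.
  apply: sup_least => z [p' [[a [h2 [h3 ->]]] ->]].
  apply: sup_ub; by exists a.
- apply: sup_ub.
  exists (limsup (fun a => (H a).1) l, bot L); split; last by [].
  move=> y [a0 [ha0 ->]]; split; last exact: bot_min.
  apply: le_trans (limsup_le_sup _ ha0) _.
  apply: sup_least => x [a [h2 [h3 ->]]].
  apply: sup_ub; exists (H a); split => //; by exists a.
Qed.

Lemma limsup_snd {O : ordinals} {K L : clat} (H : O -> prod2_clat K L) (l : O) :
  (limsup H l).2 = limsup (fun a => (H a).2) l.
Proof.
apply: le_antisym.
- apply: sup_least => x [p [hp ->]].
  apply: inf_glb => y [a0 [ha0 ->]].
  have [_ h1] := hp _ (ex_intro _ a0 (conj ha0 erefl)).
  apply: le_trans h1 _.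
  apply: sup_least => z [p' [[a [h2 [h3 ->]]] ->]].
  apply: sup_ub; by exists a.
- apply: sup_ub.
  exists (bot K, limsup (fun a => (H a).2) l); split; last by [].
  move=> y [a0 [ha0 ->]]; split; first exact: bot_min.
  apply: le_trans (limsup_le_sup _ ha0) _.
  apply: sup_least => x [a [h2 [h3 ->]]].
  apply: sup_ub; exists (H a); split => //; by exists a.
Qed.

Theorem lemma4p10 (O : ordinals) (n : nat) (Ls : 'I_n -> clat) (L : clat)
  (F : O -> prodn_clat Ls -> monmap L)
  (hF : pushable (K := prod2_clat (prodn_clat Ls) L) (K' := L)
                 (fun a (p : prod2_clat (prodn_clat Ls) L) => F a p.1 p.2)) :
  forall b : O,
    pushable (K := prodn_clat Ls) (K' := L)
             (fun a (G : prodn_clat Ls) => nu_iter (F a G) b).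
Proof.
move=> b G l hl; split.
- move=> c; apply: (main_push (fun a => F c (G a)) (F c (limsup G l))) => X.
  have [h _] := hF (fun a => (G a, X a) : prod2_clat (prodn_clat Ls) L) l hl.
  have := h c; rewrite limsup_fst limsup_snd /=; exact.
- apply: (main_push (fun a => F a (G a)) (F l (limsup G l))) => X.
  have [_ h] := hF (fun a => (G a, X a) : prod2_clat (prodn_clat Ls) L) l hl.
  move: h; rewrite limsup_fst limsup_snd /=; exact.
Qed.
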